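(* Consider the self-attention dynamics without LayerNorm, $X^{(t+1)}=A^{(t)}X^{(t)}W_V^{(t)}$, started from an arbitrary $X^{(0)}\in\mathbb{R}^{N\times d}$, and assume \textbf{A1}, \textbf{A2} and \textbf{A3}. If $\mathcal{G}$ is quasi-strongly connected with radius $r$, then there exists $\epsilon>0$ such that for all $t\ge 0$, $$A^{(t)}_{i,j}\ge \epsilon\quad\text{for all }(j,i)\in E(\mathcal{G}),$$ and there exists $C>0$ such that $$\mu(X^{(t)})\le C\,(1-\epsilon^r)^{t/r}\qquad\text{for all }t\ge 0,$$ i.e. all rows (tokens) of $X^{(t)}$ converge exponentially to a common vector.
   Context: Tokens are the rows of $X\in\mathbb{R}^{N\times d}$. An attention mask is a directed graph $\mathcal{G}$ on the node set $[N]=\{1,\dots,N\}$ with edge set $E(\mathcal{G})$; an edge $(j,i)\in E(\mathcal{G})$ means token $i$ attends to token $j$, and $\mathcal{N}_i=\{k:(k,i)\in E(\mathcal{G})\}$. For $R\in\mathbb{R}^{N\times N}$, the masked softmax is $\mathrm{softmax}_{\mathcal{G}}(R)_{ij}=\exp(R_{ij})/\sum_{k\in\mathcal{N}_i}\exp(R_{ik})$ if $(j,i)\in E(\mathcal{G})$ and $0$ otherwise. The attention matrices are $A^{(t)}=\mathrm{softmax}_{\mathcal{G}}\big(X^{(t)}W_Q^{(t)}(X^{(t)}W_K^{(t)})^\top/\sqrt{d_{QK}}\big)$ with a fixed constant $d_{QK}>0$, query/key matrices $W_Q^{(t)},W_K^{(t)}\in\mathbb{R}^{d\times d'}$ and value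 matrices $W_V^{(t)}\in\mathbb{R}^{d\times d}$; the mask $\mathcal{G}$ is the same for all $t$. Assumptions: \textbf{A1}: $(i,i)\in E(\mathcal{G})$ for every $i\in[N]$. \textbf{A2}: there is a constant $C'$ with $\max\{\|W_Q^{(t)}\|_2,\|W_K^{(t)}\|_2\}\le C'$ for all $t$. \textbf{A3}: the sequence $\big\{\|W_V^{(0)}W_V^{(1)}\cdots W_V^{(k)}\|_2\big\}_{k\ge0}$ is bounded. Similarity measure: $\mu(X)=\|X-\mathbf{1}\mathbf{1}^\top X/N\|_F$, where $\mathbf{1}\in\mathbb{R}^N$ is the all-ones vector. Graph notions: $v$ is reachable from $u$ if there is a directed path from $u$ to $v$; a center node is a node from which every node is reachable; $\mathcal{G}$ is quasi-strongly connected if it has at least one center node. The distance $\mathrm{dist}(u,v)$ is the length of a shortest directed path from $u$ to $v$; the radius of a quasi-strongly connected graph is $\min_{c\text{ center}}\max_{v}\mathrm{dist}(c,v)$. *)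

(* Defs.v *)
From HB Require Import structures.
From mathcomp Require Import all_boot all_order all_algebra.
From mathcomp Require Import all_classical all_reals all_analysis.
Set Implicit Arguments. Unset Strict Implicit. Unset Printing Implicit Defensive.
Import Order.TTheory GRing.Theory Num.Theory.
Local Open Scope ring_scope.

Section Defs.
Variable R : realType.

Definition frob (m n : nat) (M : 'M[R]_(m, n)) : R :=
  Num.sqrt (\sum_(i < m) \sum_(j < n) M i j ^+ 2).

Definition spec_norm (m n : nat) (M : 'M[R]_(m, n)) : R :=
  sup [set frob (M *m v) | v in [set v : 'cV[R]_n | frob v <= 1]]%classic.

Definition mu (N d : nat) (X : 'M[R]_(N, d)) : R :=
  frob (X - (N%:R)^-1 *: (const_mx 1 *m (const_mx 1 : 'M[R]_(1, N)) *m X)).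

(* masked softmax; E j i means edge (j,i): token i attends to token j *)
Definition masked_softmax (N : nat) (E : rel 'I_N) (M : 'M[R]_N) : 'M[R]_N :=
  \matrix_(i, j) if E j i
                 then expR (M i j) / \sum_(k | E k i) expR (M i k)
                 else 0.

Definition attention (N d d' : nat) (E : rel 'I_N) (dQK : R)
  (X : 'M[R]_(N, d)) (WQ WK : 'M[R]_(d, d')) : 'M[R]_N :=
  masked_softmax E ((Num.sqrt dQK)^-1 *: (X *m WQ *m (X *m WK)^T)).

Fixpoint mxprod (d : nat) (W : nat -> 'M[R]_d) (k : nat) : 'M[R]_d :=
  match k with
  | 0 => W 0%N
  | k'.+1 => mxprod W k' *m W k
  end.

End Defs.

Definition walk_of_len (N : nat) (E : rel 'I_N) (u v : 'I_N) (k : nat) : Prop :=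
  exists p : seq 'I_N, size p = k /\ path E u p /\ last u p = v.

Definition reachable (N : nat) (E : rel 'I_N) (u v : 'I_N) : Prop :=
  exists k, walk_of_len E u v k.

Definition center (N : nat) (E : rel 'I_N) (c : 'I_N) : Prop :=
  forall v, reachable E c v.

Definition quasi_strongly_connected (N : nat) (E : rel 'I_N) : Prop :=
  exists c, center E c.

Definition is_dist (N : nat) (E : rel 'I_N) (u v : 'I_N) (k : nat) : Prop :=
  walk_of_len E u v k /\ forall k', walk_of_len E u v k' -> (k <= k')%N.

Definition is_ecc (N : nat) (E : rel 'I_N) (c : 'I_N) (e : nat) : Prop :=
  (forall v, exists k, is_dist E c v k /\ (k <= e)%N) /\
  (exists v, is_dist E c v e).

Definition is_radius (N : nat) (E : rel 'I_N) (r : nat) : Prop :=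
  (exists c, center E c /\ is_ecc E c r) /\
  (forall c e, center E c -> is_ecc E c e -> (r <= e)%N).

(* Main.v *)
Require Import Defs.
From HB Require Import structures.
From mathcomp Require Import all_boot all_order all_algebra.
From mathcomp Require Import all_classical all_reals all_analysis.
From mathcomp Require Import lra zify.
Import Order.TTheory GRing.Theory Num.Theory.
Local Open Scope ring_scope.

Definition stoch {R : realType} {N} (M : 'M[R]_N) :=
  (forall i j, 0 <= M i j) /\ (forall i, \sum_j M i j = 1).

Lemma stoch1 {R : realType} N : stoch (1%:M : 'M[R]_N).
Proof.
split=> [i j|i]; first by rewrite mxE; case: (i == j).
rewrite (bigD1 i) //= big1 ?addr0 ?mxE ?eqxx // => j /negPf ji.
by rewrite mxE eq_sym ji.
Qed.

Lemma stochM {R : realType} N (A B : 'M[R]_N) : stoch A -> stoch B -> stoch (A *m B).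
Proof.
move=> [A0 A1] [B0 B1]; split=> [i j|i].
  rewrite mxE; apply: sumr_ge0 => k _; exact: mulr_ge0.
under eq_bigr do rewrite mxE.
rewrite exchange_big /=.
under eq_bigr do rewrite -mulr_sumr B1 mulr1.
exact: A1.
Qed.

Lemma stoch_interval {R : realType} N (A : 'M[R]_N) (x : 'I_N -> R) m w :
  stoch A -> (forall k, m <= x k <= m + w) ->
  forall i, m <= \sum_k A i k * x k <= m + w.
Proof.
move=> [A0 A1] hx i.
have -> : \sum_k A i k * x k = m + \sum_k A i k * (x k - m).
  rewrite -{1}(mul1r m) -(A1 i) mulr_suml -big_split /=.
  by apply: eq_bigr => k _; rewrite mulrBr addrC subrK.
rewrite lerDl lerD2l; apply/andP; split.
  apply: sumr_ge0 => k _; apply: mulr_ge0 => //.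
  by case/andP: (hx k) => h _; rewrite subr_ge0.
apply: (@le_trans _ _ (\sum_k A i k * w)).
  apply: ler_sum => k _; apply: ler_wpM2l => //.
  by case/andP: (hx k) => _ h; rewrite lerBlDl.
by rewrite -mulr_suml A1 mul1r.
Qed.

Lemma stoch_contract {R : realType} N (A : 'M[R]_N) (x : 'I_N -> R) m w c g :
  stoch A -> 0 <= g -> (forall i, g <= A i c) ->
  (forall k, m <= x k <= m + w) ->
  forall i, m + g * (x c - m) <= \sum_k A i k * x k <= m + g * (x c - m) + (1 - g) * w.
Proof.
move=> [A0 A1] g0 hc hx i.
have -> : \sum_k A i k * x k = m + \sum_k A i k * (x k - m).
  rewrite -{1}(mul1r m) -(A1 i) mulr_suml -big_split /=.
  by apply: eq_bigr => k _; rewrite mulrBr addrC subrK.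
rewrite (bigD1 c) //=.
have hr : forall k, 0 <= x k - m <= w.
  by move=> k; case/andP: (hx k) => h1 h2; rewrite subr_ge0 h1 /= lerBlDl.
have s0 : 0 <= \sum_(k | k != c) A i k * (x k - m).
  apply: sumr_ge0 => k _; apply: mulr_ge0 => //; by case/andP: (hr k).
have s1 : \sum_(k | k != c) A i k * (x k - m) <= (1 - A i c) * w.
  apply: (@le_trans _ _ (\sum_(k | k != c) A i k * w)).
    apply: ler_sum => k _; apply: ler_wpM2l => //; by case/andP: (hr k).
  rewrite -mulr_suml; apply: ler_wpM2r; first by case/andP: (hr c) => a b; exact: le_trans b.
  have := A1 i; rewrite (bigD1 c) //= => h; rewrite -h; lra.
have := hc i; have := hr c; move: s0 s1.
set s := \sum_(k | _) _; set a := A i c; set y := x c - m => s0 s1 /andP [y0 yw] ga.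
apply/andP; split; first nra.
have : (a - g) * y <= (a - g) * w by apply: ler_wpM2l; lra.
nra.
Qed.

Lemma frob_le {R : realType} {m n} (M : 'M[R]_(m, n)) b :
  0 <= b -> (forall i j, `|M i j| <= b) -> frob M <= (m * n)%N%:R * b.
Proof.
move=> b0 hM; rewrite /frob.
have h1 : \sum_(i < m) \sum_(j < n) M i j ^+ 2 <= (m * n)%N%:R * b ^+ 2.
  apply: (@le_trans _ _ (\sum_(i < m) \sum_(j < n) b ^+ 2)).
    apply: ler_sum => i _; apply: ler_sum => j _.
    rewrite -real_normK ?num_real //; apply: lerXn2r => //; rewrite ?nnegrE //.
  by rewrite !sumr_const !card_ord -mulrnA mulr_natl mulnC.
have h2 : (m * n)%N%:R * b ^+ 2 <= ((m * n)%N%:R * b) ^+ 2.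
  rewrite exprMn; apply: ler_wpM2r; first exact: exprn_ge0.
  case: (m * n)%N => [|k]; first by rewrite expr0n.
  by rewrite expr2 ler_peMl // ?ler1n // ler0n.
apply: (le_trans (ler_wsqrtr (le_trans h1 h2))).
by rewrite sqrtr_sqr ger0_norm // mulr_ge0.
Qed.

Lemma entry_le_frob {R : realType} {m n} (M : 'M[R]_(m, n)) i j : `|M i j| <= frob M.
Proof.
rewrite /frob -sqrtr_sqr; apply: ler_wsqrtr.
rewrite (bigD1 i) //= (bigD1 j) //= -addrA lerDl.
apply: addr_ge0; first by apply: sumr_ge0 => k _; exact: sqr_ge0.
apply: sumr_ge0 => k _; apply: sumr_ge0 => l _; exact: sqr_ge0.
Qed.

Lemma spec_entry {R : realType} {m n} (M : 'M[R]_(m, n)) k j :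
  `|M k j| <= spec_norm M.
Proof.
rewrite /spec_norm.
set S := \sum_(i < m) \sum_(l < n) `|M i l|.
have S0 : 0 <= S by apply: sumr_ge0 => i _; apply: sumr_ge0 => l _.
apply: (@le_trans _ _ (frob (M *m delta_mx j (0 : 'I_1)))).
  by have := entry_le_frob (M *m delta_mx j (0 : 'I_1)) k 0; rewrite -colE mxE.
apply: ub_le_sup; last first.
  exists (delta_mx j 0) => //=; rewrite /frob.
  rewrite (bigD1 j) //= big_ord1 mxE !eqxx /= expr1n big1 ?addr0 ?sqrtr1 //.
  by move=> i /negPf ij; rewrite big_ord1 mxE ij /= expr0n.
exists ((m * 1)%:R * S) => y [v /= hv <-].
apply: frob_le => // i z.
rewrite mxE; apply: le_trans (ler_norm_sum _ _ _) _.
apply: (@le_trans _ _ (\sum_l `|M i l|)).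
  apply: ler_sum => l _; rewrite normrM -{2}(mulr1 `|M i l|).
  apply: ler_wpM2l => //; exact: le_trans (entry_le_frob _ _ _) hv.
by rewrite /S (bigD1 i) //= lerDl; apply: sumr_ge0 => i' _; apply: sumr_ge0.
Qed.

Lemma softmax_den_gt0 {R : realType} {N} (E : rel 'I_N) (S : 'M[R]_N) i :
  E i i -> 0 < \sum_(k | E k i) expR (S i k).
Proof.
move=> Eii; rewrite (bigD1 i) //=; apply: ltr_pwDl; first exact: expR_gt0.
by apply: sumr_ge0 => k _; apply: ltW; exact: expR_gt0.
Qed.

Lemma softmax_stoch {R : realType} {N} (E : rel 'I_N) (S : 'M[R]_N) :
  (forall i, E i i) -> stoch (masked_softmax E S).
Proof.
move=> Er; split=> [i j|i].
  rewrite mxE; case: ifP => // _; apply: divr_ge0; first exact: ltW (expR_gt0 _).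
  exact: ltW (softmax_den_gt0 E S i (Er i)).
under eq_bigr do rewrite mxE.
rewrite -(big_mkcond (fun j => E j i)) /= -mulr_suml mulfV //.
exact: lt0r_neq0 (softmax_den_gt0 E S i (Er i)).
Qed.

Lemma softmax_lb {R : realType} {N} (E : rel 'I_N) (S : 'M[R]_N) K i j :
  (forall i, E i i) -> (forall i j, `|S i j| <= K) -> E j i ->
  expR (- K) / (N%:R * expR K) <= masked_softmax E S i j.
Proof.
move=> Er hS Eji; rewrite mxE Eji.
have T0 := softmax_den_gt0 E S i (Er i).
have hT : \sum_(k | E k i) expR (S i k) <= N%:R * expR K.
  apply: (@le_trans _ _ (\sum_(k | E k i) expR K)).
    apply: ler_sum => k _; rewrite ler_expR; by case/ler_normlP: (hS i k).
  apply: (@le_trans _ _ (\sum_(k < N) expR K)).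
    rewrite [X in _ <= X](bigID (fun k => E k i)) /= lerDl.
    by apply: sumr_ge0 => k _; exact: ltW (expR_gt0 _).
  by rewrite sumr_const card_ord mulr_natl.
apply: ler_pM.
- exact: ltW (expR_gt0 _).
- by rewrite invr_ge0 mulr_ge0 // ltW // expR_gt0.
- rewrite ler_expR; case/ler_normlP: (hS i j) => h _; lra.
- rewrite lef_pV2 // posrE //; exact: lt_le_trans hT.
Qed.

Fixpoint Pm {R : realType} {N} (A : nat -> 'M[R]_N) t : 'M[R]_N :=
  match t with 0 => 1%:M | t'.+1 => A t' *m Pm A t' end.
Fixpoint Blk {R : realType} {N} (A : nat -> 'M[R]_N) t k : 'M[R]_N :=
  match k with 0 => 1%:M | k'.+1 => A (t + k')%N *m Blk A t k' end.

Lemma Pm_add {R : realType} {N} (A : nat -> 'M[R]_N) t k :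
  Pm A (t + k) = Blk A t k *m Pm A t.
Proof.
elim: k => [|k IH]; first by rewrite addn0 /= mul1mx.
by rewrite addnS /= IH mulmxA.
Qed.

Lemma Pm_stoch {R : realType} {N} (A : nat -> 'M[R]_N) t :
  (forall t, stoch (A t)) -> stoch (Pm A t).
Proof. move=> hA; elim: t => [|t IH] /=; [exact: stoch1 | exact: stochM]. Qed.

Lemma Blk_stoch {R : realType} {N} (A : nat -> 'M[R]_N) t k :
  (forall t, stoch (A t)) -> stoch (Blk A t k).
Proof. move=> hA; elim: k => [|k IH] /=; [exact: stoch1 | exact: stochM]. Qed.

Definition good {R : realType} {N} (P : 'M[R]_N) w :=
  forall l, exists m, forall i, m <= P i l <= m + w.

Lemma good_stoch {R : realType} {N} (M P : 'M[R]_N) w :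
  stoch M -> good P w -> good (M *m P) w.
Proof.
move=> hM hP l; have [m hm] := hP l; exists m => i.
rewrite mxE; exact: (@stoch_interval _ _ M (fun k => P k l)).
Qed.

Lemma good_contract {R : realType} {N} (M P : 'M[R]_N) w c g :
  stoch M -> 0 <= g -> (forall i, g <= M i c) -> good P w ->
  good (M *m P) ((1 - g) * w).
Proof.
move=> hM g0 hc hP l; have [m hm] := hP l.
exists (m + g * (P c l - m)) => i.
rewrite mxE; exact: (@stoch_contract _ _ M (fun k => P k l) m w c g hM g0 hc hm i).
Qed.

Lemma good1 {R : realType} {N} : good (1%:M : 'M[R]_N) 1.
Proof. by move=> l; exists 0 => i; rewrite mxE add0r; case: (i == l); rewrite /= ?lexx ?ler01. Qed.

Lemma good_blocks {R : realType} {N} (A : nat -> 'M[R]_N) r c g :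
  (forall t, stoch (A t)) -> 0 <= g -> (forall t i, g <= Blk A t r i c) ->
  forall q s, good (Pm A (q * r + s)) ((1 - g) ^+ q).
Proof.
move=> hA g0 hB; elim=> [|q IH] s.
  rewrite mul0n add0n expr0; elim: s => [|s IHs] /=; first exact: good1.
  exact: good_stoch.
have -> : (q.+1 * r + s = (q * r + s) + r)%N by rewrite mulSn; lia.
rewrite Pm_add exprS; apply: good_contract => //; exact: Blk_stoch.
Qed.

Lemma sum_ge_term {R : realType} {N} (f : 'I_N -> R) u :
  (forall k, 0 <= f k) -> f u <= \sum_k f k.
Proof.
move=> h; rewrite (bigD1 u) //= lerDl; exact: sumr_ge0.
Qed.

Lemma Blk_lb {R : realType} {N} (E : rel 'I_N) (A : nat -> 'M[R]_N) eps c :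
  (forall t, stoch (A t)) -> 0 <= eps -> (forall i, E i i) ->
  (forall t i j, E j i -> eps <= A t i j) ->
  forall t k v j, (j <= k)%N -> walk_of_len E c v j -> eps ^+ k <= Blk A t k v c.
Proof.
move=> hA e0 Er hE t; elim=> [|k IH] v j.
  rewrite leqn0 => /eqP -> [p [/size0nil -> [_ /= ->]]].
  by rewrite expr0 /= mxE eqxx.
move=> hj hw; rewrite /= mxE.
have Bn := (Blk_stoch A t k hA).1.
have An := (hA (t + k)%N).1.
have hprod : forall u, eps <= A (t + k)%N v u -> eps ^+ k <= Blk A t k u c ->
    eps ^+ k.+1 <= \sum_u0 A (t + k)%N v u0 * Blk A t k u0 c.
  move=> u h1 h2; apply: le_trans (sum_ge_term (fun u0 => A (t + k)%N v u0 * Blk A t k u0 c) u _).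
    rewrite exprS; apply: ler_pM => //; exact: exprn_ge0.
  move=> u0; exact: mulr_ge0.
case: (leqP j k) => [hle|hgt].
  apply: (hprod v); first exact: hE.
  exact: (IH v j).
have ej : j = k.+1 by apply/eqP; rewrite eqn_leq hj hgt.
subst j; case: hw => p [sp [pp lp]].
move: sp pp lp; case/lastP: p => [|p' x] //.
rewrite size_rcons => -[sp']; rewrite rcons_path last_rcons => /andP [pp' ex] xv.
apply: (hprod (last c p')); first by apply: hE; rewrite -xv.
apply: (IH _ k) => //; by exists p'.
Qed.

Lemma mulmx_entry_bound {R : realType} {m n p} (A : 'M[R]_(m, n)) (B : 'M[R]_(n, p)) a b i j :
  (forall i k, `|A i k| <= a) -> (forall k j, `|B k j| <= b) ->
  `|(A *m B) i j| <= n%:R * (a * b).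
Proof.
move=> hA hB; rewrite mxE; apply: le_trans (ler_norm_sum _ _ _) _.
apply: (@le_trans _ _ (\sum_(k < n) a * b)); last by rewrite sumr_const card_ord mulr_natl.
apply: ler_sum => k _; rewrite normrM; apply: ler_pM => //.
Qed.

Lemma stoch_entry_bound {R : realType} {N d} (P : 'M[R]_N) (Y : 'M[R]_(N, d)) KY i j :
  stoch P -> (forall l j, `|Y l j| <= KY) -> `|(P *m Y) i j| <= KY.
Proof.
move=> [P0 P1] hY; rewrite mxE; apply: le_trans (ler_norm_sum _ _ _) _.
apply: (@le_trans _ _ (\sum_l P i l * KY)); last by rewrite -mulr_suml P1 mul1r.
apply: ler_sum => l _; rewrite normrM ger0_norm //; exact: ler_wpM2l.
Qed.

Lemma mu_bound {R : realType} {N d} (P : 'M[R]_N) (Y : 'M[R]_(N, d)) w KY :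
  0 <= w -> 0 <= KY -> good P w -> (forall l j, `|Y l j| <= KY) ->
  mu (P *m Y) <= (N * d)%N%:R * (N%:R * (w * KY)).
Proof.
move=> w0 K0 hP hY; rewrite /mu; apply: frob_le => [|i j].
  by rewrite mulr_ge0 // mulr_ge0.
have N0 : (N%:R : R) != 0 by rewrite pnatr_eq0 -lt0n; apply: (leq_ltn_trans _ (ltn_ord i)).
set Z := P *m Y.
have hZ : forall k, `|Z i j - Z k j| <= N%:R * (w * KY).
  move=> k; rewrite /Z !mxE -sumrB.
  apply: le_trans (ler_norm_sum _ _ _) _.
  apply: (@le_trans _ _ (\sum_(l < N) w * KY)); last by rewrite sumr_const card_ord mulr_natl.
  apply: ler_sum => l _; rewrite -mulrBl normrM; apply: ler_pM => //.
  have [m hm] := hP l; have := hm i; have := hm k.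
  move=> /andP [h1 h2] /andP [h3 h4]; apply/ler_normlP; split; lra.
have -> : (Z - N%:R^-1 *: (const_mx 1 *m (const_mx 1 : 'M[R]_(1, N)) *m Z)) i j =
          N%:R^-1 * \sum_k (Z i j - Z k j).
  clearbody Z.
  rewrite !mxE sumrB sumr_const card_ord mulrBr -[Z i j *+ N]mulr_natr mulrCA mulVf // mulr1.
  congr (_ - _ * _); apply: eq_bigr => k _; rewrite !mxE big_ord1 !mxE !mul1r //.
rewrite normrM ger0_norm ?invr_ge0 ?ler0n //.
apply: (@le_trans _ _ (N%:R^-1 * \sum_(k < N) N%:R * (w * KY))).
  apply: ler_wpM2l; first by rewrite invr_ge0 ler0n.
  apply: le_trans (ler_norm_sum _ _ _) _; exact: ler_sum.
by rewrite sumr_const card_ord -[N%:R * (w * KY) *+ N]mulr_natr mulrCA mulVf // mulr1.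
Qed.

Theorem theorem1 (R : realType) (N d d' : nat) (E : rel 'I_N) (dQK : R)
  (WQ WK : nat -> 'M[R]_(d, d')) (WV : nat -> 'M[R]_d)
  (X : nat -> 'M[R]_(N, d)) (r : nat) :
  0 < dQK ->
  (forall t, X t.+1 = attention E dQK (X t) (WQ t) (WK t) *m X t *m WV t) ->
  (* A1 *) (forall i, E i i) ->
  (* A2 *) (exists C' : R, forall t,
              Num.max (spec_norm (WQ t)) (spec_norm (WK t)) <= C') ->
  (* A3 *) (exists B : R, forall k, spec_norm (mxprod WV k) <= B) ->
  quasi_strongly_connected E ->
  is_radius E r ->
  exists eps : R, 0 < eps /\
    (forall t (i j : 'I_N), E j i ->
       eps <= attention E dQK (X t) (WQ t) (WK t) i j) /\
    (exists C : R, 0 < C /\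
       forall t : nat, mu (X t) <= C * powR (1 - eps ^+ r) (t%:R / r%:R)).
Proof.
move=> dQK0 hX Er [C' hC'] [B hB] _ [[c [_ [hecc _]]] _].
pose A t := attention E dQK (X t) (WQ t) (WK t).
have hA : forall t, stoch (A t) by move=> t; exact: softmax_stoch.
pose Q t := match t with 0 => (1%:M : 'M[R]_d) | k.+1 => mxprod WV k end.
have hQ : forall t, Q t.+1 = Q t *m WV t by case=> [|t] /=; rewrite ?mul1mx.
have hXe : forall t, X t = Pm A t *m X 0%N *m Q t.
  elim=> [|t IH]; first by rewrite /= mul1mx mulmx1.
  rewrite hX -/(A t) [in LHS]IH hQ /= !mulmxA //.
pose BQ := Num.max 1 B.
have hQb : forall t k j, `|Q t k j| <= BQ.
  case=> [|t] k j /=.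
    rewrite mxE; apply: le_trans (_ : 1 <= BQ); last by rewrite le_max lexx.
    by case: (k == j); rewrite ?normr1 ?normr0 ?ler01.
  apply: le_trans (spec_entry _ k j) _; apply: le_trans (hB t) _.
  by rewrite le_max lexx orbT.
have BQ0 : 0 <= BQ by apply: le_trans (_ : 1 <= BQ); rewrite ?ler01 // le_max lexx.
pose K0 := \sum_l \sum_k `|X 0%N l k|.
have hX0 : forall l k, `|X 0%N l k| <= K0.
  move=> l k; apply: le_trans (sum_ge_term (fun k => `|X 0%N l k|) k _) _ => //.
  by apply: sum_ge_term => l'; apply: sumr_ge0.
have K00 : 0 <= K0 by apply: sumr_ge0 => l _; apply: sumr_ge0.
pose KY := d%:R * (K0 * BQ).
have KY0 : 0 <= KY by rewrite mulr_ge0 // mulr_ge0.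
have hY : forall t l j, `|(X 0%N *m Q t) l j| <= KY.
  by move=> t l j; apply: mulmx_entry_bound.
have hXb : forall t i j, `|X t i j| <= KY.
  move=> t i j; rewrite hXe -mulmxA; apply: stoch_entry_bound => //.
  exact: Pm_stoch.
clearbody KY.
have hWQ : forall t k j, `|WQ t k j| <= C'.
  move=> t k j; apply: le_trans (spec_entry _ k j) _; apply: le_trans (hC' t).
  by rewrite le_max lexx.
have hWK : forall t k j, `|WK t k j| <= C'.
  move=> t k j; apply: le_trans (spec_entry _ k j) _; apply: le_trans (hC' t).
  by rewrite le_max lexx orbT.
pose a := d%:R * (KY * C').
pose K := (Num.sqrt dQK)^-1 * (d'%:R * (a * a)).
have hS : forall t i j,
    `|((Num.sqrt dQK)^-1 *: (X t *m WQ t *m (X t *m WK t)^T)) i j| <= K.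
  move=> t i j; rewrite mxE normrM ger0_norm ?invr_ge0 ?sqrtr_ge0 //.
  apply: ler_wpM2l; first by rewrite invr_ge0 sqrtr_ge0.
  apply: mulmx_entry_bound => [i' k|k j']; first exact: mulmx_entry_bound.
  rewrite mxE; exact: mulmx_entry_bound.
have N0 : (0 < N)%N by apply: leq_ltn_trans (ltn_ord c).
pose eps0 := expR (- K) / (N%:R * expR K).
have eps00 : 0 < eps0.
  by rewrite divr_gt0 ?expR_gt0 // mulr_gt0 ?expR_gt0 // ltr0n.
pose eps := Num.min eps0 2^-1.
have eps_gt0 : 0 < eps by rewrite lt_min eps00 invr_gt0 ltr0n.
have eps_le : eps <= 2^-1 by rewrite ge_min lexx orbT.
have hAlb : forall t i j, E j i -> eps <= A t i j.
  move=> t i j Eji; apply: le_trans (_ : eps <= eps0) _; first by rewrite ge_min lexx.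
  exact: softmax_lb.
exists eps; split => //; split => //.
pose g := eps ^+ r.
have g0 : 0 <= g by rewrite exprn_ge0 // ltW.
have g1 : g <= 1.
  apply: exprn_ile1; first exact: ltW.
  apply: le_trans eps_le _; rewrite invf_le1 ?ler1n ?ltr0n //.
have hBlk : forall t v, g <= Blk A t r v c.
  move=> t v; have [k [[hw _] hk]] := hecc v.
  exact: (@Blk_lb _ _ E A eps c hA (ltW eps_gt0) Er hAlb t r v k hk hw).
have hgood := @good_blocks _ _ A r c g hA g0 hBlk.
pose K' := (N * d)%N%:R * (N%:R * KY).
have K'0 : 0 <= K' by rewrite mulr_ge0 // mulr_ge0.
have hmu : forall t, mu (X t) <= K' * (1 - g) ^+ (t %/ r)%N.
  move=> t; rewrite hXe -mulmxA.
  have hg : good (Pm A t) ((1 - g) ^+ (t %/ r)%N).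
    by have := hgood (t %/ r)%N (t %% r)%N; rewrite -divn_eq.
  have hw0 : 0 <= (1 - g) ^+ (t %/ r)%N by rewrite exprn_ge0 // subr_ge0.
  apply: le_trans (mu_bound _ _ _ _ hw0 KY0 hg (hY t)) _.
  by rewrite /K' (mulrC (_ ^+ _) KY) !mulrA.
have e1 : 0 < 1 - eps by lra.
have hu : K' <= K' / (1 - eps).
  rewrite ler_pdivlMr //; rewrite -{2}(mulr1 K'); apply: ler_wpM2l => //; lra.
exists (K' / (1 - eps) + 1); split.
  by apply: ltr_wpDl; rewrite ?ltr01 // divr_ge0 // ltW.
move=> t; apply: le_trans (hmu t) _.
rewrite /g; have [r0|rpos] := eqVneq r 0%N.
  rewrite r0 expr0 subrr divn0 expr0 mulr1 invr0 mulr0 powRr0 mulr1; lra.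
set q := (t %/ r)%N.
set aa := 1 - eps ^+ r.
have er : eps ^+ r <= eps.
  have -> : eps ^+ r = eps * eps ^+ r.-1 by rewrite -exprS prednK // lt0n.
  rewrite -[X in _ <= X](mulr1 eps); apply: ler_wpM2l; first exact: ltW.
  apply: exprn_ile1; first exact: ltW.
  apply: le_trans eps_le _; rewrite invf_le1 ?ler1n ?ltr0n //.
have ha1 : 1 - eps <= aa by rewrite /aa; lra.
have ha0 : 0 < aa by lra.
have ha2 : aa <= 1 by rewrite /aa; have := exprn_ge0 r (ltW eps_gt0); lra.
have hp : aa ^+ q.+1 <= powR aa (t%:R / r%:R).
  rewrite -powR_mulrn; last exact: ltW ha0.
  apply: ger_powR; first by rewrite ha0 ha2.
  rewrite ler_pdivrMr ?ltr0n ?lt0n // -natrM ler_nat; apply: ltnW; apply: ltn_ceil.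
  by rewrite lt0n.
have aq0 : 0 <= aa ^+ q by rewrite exprn_ge0 // ltW.
have hK : K' <= K' / (1 - eps) * aa.
  apply: (le_trans (_ : K' <= K' / (1 - eps) * (1 - eps))).
    by rewrite divfK // gt_eqF.
  apply: ler_wpM2l => //; rewrite divr_ge0 // ltW //.
apply: (le_trans (_ : _ <= (K' / (1 - eps) * aa) * aa ^+ q)).
  exact: ler_wpM2r.
rewrite -mulrA -exprS.
apply: (le_trans (_ : _ <= (K' / (1 - eps)) * powR aa (t%:R / r%:R))).
  apply: ler_wpM2l => //; rewrite divr_ge0 // ltW //.
apply: ler_wpM2r; first exact: powR_ge0.
lra.
Qed.
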